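(* Let $G=(L\cup R,E)$ be a $(c,d,\alpha,\delta)$-bipartite expander with $L=[n]$, and $C_0\subseteq\mathbb{F}_2^d$ a linear code of minimum distance $d_0\ge2$. Let $x\in\mathbb{F}_2^n$ and $y\in T(G,C_0)$ with $d_H(x,y)\le\alpha n$, and let $F=F(x,y)$. Then $$c|F|\ge|U(x)|\ge|N_{\le d_0-1}(F)|\ge\frac{\delta d_0-1}{d_0-1}\cdot c|F|.$$
   Context: A bipartite graph is $(c,d)$-regular if left degrees are $c$ and right degrees $d$. $N(S)$ is the neighborhood of $S$, $N_i(S)$ the set of vertices adjacent to exactly $i$ vertices of $S$, and $N_{\le t}(S)=\bigcup_{1\le j\le t}N_j(S)$. A $(c,d,\alpha,\delta)$-bipartite expander is a $(c,d)$-regular bipartite graph with $|N(S)|\ge\delta c|S|$ for every $S\subseteq L$ with $|S|\le\alpha|L|$. Tanner code: $L=[n]$, for each $v\in R$ a fixed ordering of $N(v)$ defines the restriction $x_{N(v)}\in\mathbb{F}_2^d$, and $T(G,C_0)=\{x\in\mathbb{F}_2^n: x_{N(v)}\in C_0\ \forall v\in R\}$. $F(x,y)=\{i\in[n]:x_i\ne y_i\}$ and $U(x)=\{v\in R:x_{N(v)}\notin C_0\}$. *)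

(* Defs.v *)
From mathcomp Require Import all_boot all_order all_algebra.
Set Implicit Arguments. Unset Strict Implicit. Unset Printing Implicit Defensive.
Import Order.TTheory GRing.Theory Num.Theory.
Local Open Scope ring_scope.

Section Graph.
Variables (L R : finType) (adj : L -> R -> bool).

Definition nbh (S : {set L}) : {set R} := [set v | [exists u in S, adj u v]].
Definition deg_in (S : {set L}) (v : R) : nat := #|[set u in S | adj u v]|.
Definition Nexact (S : {set L}) (i : nat) : {set R} := [set v | deg_in S v == i].
Definition Nle (S : {set L}) (t : nat) : {set R} :=
  [set v | (0 < deg_in S v)%N && (deg_in S v <= t)%N].

Definition biregular (c d : nat) : Prop :=
  (forall u : L, #|[set v | adj u v]| = c) /\ (forall v : R, #|[set u | adj u v]| = d).

Definition bip_expander (K : realFieldType) (c d : nat) (alpha delta : K) : Prop :=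
  biregular c d /\
  forall S : {set L}, (#|S|%:R <= alpha * #|L|%:R) ->
    delta * c%:R * #|S|%:R <= #|nbh S|%:R.

(* ord v is a fixed ordering (bijection 'I_d -> N(v)) of the neighbourhood of v *)
Definition nbh_ordering (d : nat) (ord : R -> 'I_d -> L) : Prop :=
  forall v, injective (ord v) /\ forall u, adj u v <-> exists j, ord v j = u.
End Graph.

Definition wt (m : nat) (w : 'rV['F_2]_m) : nat := #|[set j | w 0 j != 0]|.

Definition is_linear_code (m : nat) (C0 : {set 'rV['F_2]_m}) : Prop :=
  0 \in C0 /\ (forall a b, a \in C0 -> b \in C0 -> a + b \in C0) /\
  (forall (k : 'F_2) a, a \in C0 -> k *: a \in C0).

(* minimum distance of a linear code = minimum weight of a nonzero codeword *)
Definition min_dist (m : nat) (C0 : {set 'rV['F_2]_m}) (d0 : nat) : Prop :=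
  (exists w, [/\ w \in C0, w != 0 & wt w = d0]) /\
  (forall w, w \in C0 -> w != 0 -> (d0 <= wt w)%N).

Definition restr (n d : nat) (R : finType) (ord : R -> 'I_d -> 'I_n)
  (x : 'rV['F_2]_n) (v : R) : 'rV['F_2]_d := \row_(j < d) x 0 (ord v j).

Definition tanner (n d : nat) (R : finType) (ord : R -> 'I_d -> 'I_n)
  (C0 : {set 'rV['F_2]_d}) : {set 'rV['F_2]_n} :=
  [set x | [forall v : R, restr ord x v \in C0]].

Definition Fdiff (n : nat) (x y : 'rV['F_2]_n) : {set 'I_n} := [set i | x 0 i != y 0 i].
Definition dH (n : nat) (x y : 'rV['F_2]_n) : nat := #|Fdiff x y|.

Definition Uset (n d : nat) (R : finType) (ord : R -> 'I_d -> 'I_n)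
  (C0 : {set 'rV['F_2]_d}) (x : 'rV['F_2]_n) : {set R} :=
  [set v | restr ord x v \notin C0].

(* Main.v *)
Require Import Defs.
From mathcomp Require Import all_boot all_order all_algebra.
From mathcomp Require Import zify ring lra.
Import Order.TTheory GRing.Theory Num.Theory.
Local Open Scope ring_scope.

Section S.
Variables (n : nat) (R : finType) (adj : 'I_n -> R -> bool).

Lemma card_sum_bool (T : finType) (A : {pred T}) (P : pred T) :
  #|[set u in A | P u]| = (\sum_(u in A) P u)%N.
Proof.
rewrite -sum1_card [RHS]big_mkcond [LHS]big_mkcond; apply: eq_bigr => u _.
by rewrite inE; case: (u \in A); case: (P u).
Qed.

Lemma sum_deg (c : nat) (F : {set 'I_n}) :
  (forall u, #|[set v | adj u v]| = c) ->
  (\sum_v deg_in adj F v)%N = (c * #|F|)%N.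
Proof.
move=> Hc.
rewrite /deg_in (eq_bigr (fun v => \sum_(u in F) adj u v)%N); last first.
  by move=> v _; rewrite card_sum_bool.
rewrite exchange_big /= (eq_bigr (fun _ => c)); last first.
  move=> u _; rewrite -(Hc u).
  have := @card_sum_bool R predT (adj u).
  by rewrite (_ : [set u0 in predT | adj u u0] = [set v | adj u v]) //; apply/setP => v; rewrite !inE.
by rewrite sum_nat_const mulnC.
Qed.

Lemma nbh_deg (F : {set 'I_n}) v : (v \in nbh adj F) = (0 < deg_in adj F v)%N.
Proof.
rewrite inE /deg_in card_gt0; apply/existsP/set0Pn => [[u /andP[Hu Ha]]|[u]].
  by exists u; rewrite inE Hu Ha.
by rewrite inE => /andP[Hu Ha]; exists u; rewrite Hu Ha.
Qed.
End S.
Section M.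
Variables (n d : nat) (R : finType) (adj : 'I_n -> R -> bool) (ord : R -> 'I_d -> 'I_n).
Hypothesis Hord : nbh_ordering adj ord.

Lemma wt_diff (x y : 'rV['F_2]_n) v :
  wt (restr ord x v - restr ord y v) = deg_in adj (Fdiff x y) v.
Proof.
rewrite /wt /deg_in.
have -> : [set u in Fdiff x y | adj u v] = ord v @: [set j | ord v j \in Fdiff x y].
  apply/setP => u; rewrite !inE; apply/andP/imsetP.
    move=> [Hu Ha]; have [j Hj] := (proj2 (Hord v) u).1 Ha.
    by exists j => //; rewrite !inE Hj.
  move=> [j]; rewrite inE => Hj ->.
  split; first by move: Hj; rewrite inE.
  by apply (proj2 (Hord v) (ord v j)).2; exists j.
rewrite card_imset; last exact: (proj1 (Hord v)).
apply: eq_card => j; rewrite !inE !mxE subr_eq0 //.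
Qed.
End M.

Theorem lemma2p7 (K : realFieldType) (n : nat) (R : finType) (c d : nat)
  (alpha delta : K) (adj : 'I_n -> R -> bool) (ord : R -> 'I_d -> 'I_n)
  (C0 : {set 'rV['F_2]_d}) (d0 : nat) (x y : 'rV['F_2]_n) :
  bip_expander adj c d alpha delta ->
  nbh_ordering adj ord ->
  is_linear_code C0 -> min_dist C0 d0 -> (2 <= d0)%N ->
  y \in tanner ord C0 ->
  (dH x y)%:R <= alpha * n%:R ->
  [/\ (#|Uset ord C0 x| <= c * #|Fdiff x y|)%N,
      (#|Nle adj (Fdiff x y) (d0 - 1)| <= #|Uset ord C0 x|)%N &
      (delta * d0%:R - 1) / (d0 - 1)%:R * (c * #|Fdiff x y|)%:R
        <= #|Nle adj (Fdiff x y) (d0 - 1)|%:R ].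
Proof.
move=> [[Hc _] Hexp] Hord [C00 [CD CZ]] [_ Hmd] Hd0 Hy Hdist.
set F := Fdiff x y.
have Hyv v : restr ord y v \in C0 by move: Hy; rewrite inE => /forallP.
have Hsum := @sum_deg n R adj c F Hc.
have HNF : (#|nbh adj F| <= c * #|F|)%N.
  rewrite -Hsum -sum1_card big_mkcond /=; apply: leq_sum => v _.
  by rewrite nbh_deg; case: ifP.
have HU : Uset ord C0 x \subset nbh adj F.
  apply/subsetP => v; rewrite !inE => Hx.
  have Hne : restr ord x v - restr ord y v != 0.
    by rewrite subr_eq0; apply: contraNneq Hx => ->.
  have : (0 < wt (restr ord x v - restr ord y v))%N.
    rewrite /wt card_gt0; apply/set0Pn.
    have [j Hj] : exists j, (restr ord x v - restr ord y v) 0 j != 0.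
      apply/existsP; apply: contraNT Hne => /existsPn H.
      by apply/eqP/rowP => j; rewrite !mxE; move: (H j); rewrite !mxE negbK => /eqP.
    by exists j; rewrite inE.
  rewrite (@wt_diff n d R adj ord Hord x y v) /deg_in card_gt0 => /set0Pn [u].
  by rewrite inE => /andP[Hu Ha]; apply/existsP; exists u; rewrite Hu Ha.
have HNle : Nle adj F (d0 - 1) \subset Uset ord C0 x.
  apply/subsetP => v; rewrite !inE => /andP[H1 H2]; apply/negP => Hx.
  have Hw : restr ord x v - restr ord y v \in C0.
    by apply: CD => //; rewrite -scaleN1r; apply: CZ.
  have Hwt := @wt_diff n d R adj ord Hord x y v; rewrite -/F in Hwt.
  have Hne : restr ord x v - restr ord y v != 0.
    apply: contraTneq H1 => H0; rewrite -Hwt H0 /wt.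
    by rewrite (_ : [set j | _] = set0) ?cards0 //; apply/setP => j; rewrite !inE mxE eqxx.
  have := Hmd _ Hw Hne; rewrite Hwt => H3.
  by move: (leq_trans H3 H2); case: d0 Hd0 {Hmd H2 H3} => // k _; rewrite subn1 /= ltnn.
split.
- exact: leq_trans (subset_leq_card HU) HNF.
- exact: subset_leq_card HNle.
have Hcount : (d0 * #|nbh adj F| <= c * #|F| + (d0 - 1) * #|Nle adj F (d0 - 1)|)%N.
  rewrite -Hsum -!sum1_card !big_distrr /= [X in (_ <= _ + X)%N]big_mkcond
    [X in (X <= _)%N]big_mkcond -big_split /=.
  apply: leq_sum => v _; rewrite (@nbh_deg n R adj F v) [v \in Nle _ _ _]inE !muln1.
  case: (posnP (deg_in adj F v)) => [->|Hp] //; idtac.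
  case: (leqP (deg_in adj F v) (d0 - 1)) => Hle /=; lia.
have Hexp' := Hexp F; rewrite card_ord in Hexp'.
have {}Hexp' := Hexp' Hdist.
have Hc' : ((d0 * #|nbh adj F|)%:R <= (c * #|F| + (d0 - 1) * #|Nle adj F (d0 - 1)|)%:R :> K)
  by rewrite ler_nat.
move: Hc' Hexp'; rewrite !natrD !natrM.
have [e He] : exists e, d0 = e.+1 by exists d0.-1; rewrite prednK // ltnW.
rewrite He subn1 /= -addn1 natrD.
have ep : (0 : K) < e%:R by rewrite ltr0n; lia.
set a := (c%:R : K); set f := (#|F|%:R : K); set N := (#|nbh adj F|%:R : K);
set m := (#|Nle adj F e|%:R : K); set E := (e%:R : K).
move=> H1 H2.
rewrite mulrAC ler_pdivrMr //.
have H3 : (E + 1) * (delta * a * f) <= (E + 1) * N.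
  by rewrite ler_wpM2l // ?addr_ge0 // ltW.
nra.
Qed.
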